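(* The translation of LTL formulas whose languages are recognizable by deterministic co-Büchi word automata into GFG-NSWs is doubly exponential: in the worst case, a GFG-NSW equivalent to such a formula requires a number of states doubly exponential in the length of the formula.
   Context: LTL is linear temporal logic; the language of an LTL formula over atomic propositions $AP$ is the set of infinite words over $2^{AP}$ satisfying it. An NSW is a nondeterministic Streett word automaton $\langle\Sigma,Q,Q_0,\delta,\alpha\rangle$ with $\delta:Q\times\Sigma\to2^Q$ and $\alpha$ a set of pairs $\langle E,F\rangle$; a run is accepting iff for every pair the set $S$ of infinitely visited states satisfies $S\cap E=\emptyset$ or $S\cap F\ne\emptyset$. A deterministic co-Büchi word automaton (DCW) is a deterministic automaton with $\alpha\subseteq Q$ accepting runs that visit $\alpha$ only finitely often. An automaton is GFG if there is a strategy $g:\Sigma^*\to Q$ such that for every $w=a_1a_2\cdots$, $g(\epsilon),g(a_1),g(a_1a_2),\ldots$ is a run on $w$, accepting whenever $w$ is in the language. *)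

(* Defs.v *)
From mathcomp Require Import all_boot.
Set Implicit Arguments. Unset Strict Implicit. Unset Printing Implicit Defensive.

Inductive ltl (AP : Type) : Type :=
| LTrue | LFalse
| LAtom of AP
| LNot of ltl AP
| LAnd of ltl AP & ltl AP
| LOr of ltl AP & ltl AP
| LNext of ltl AP
| LUntil of ltl AP & ltl AP
| LRelease of ltl AP & ltl AP
| LEventually of ltl AP
| LGlobally of ltl AP.

Fixpoint ltl_size AP (f : ltl AP) : nat :=
  match f with
  | LTrue | LFalse | LAtom _ => 1
  | LNot g | LNext g | LEventually g | LGlobally g => (ltl_size g).+1
  | LAnd g h | LOr g h | LUntil g h | LRelease g h => (ltl_size g + ltl_size h).+1
  end.

Definition word (AP : finType) := nat -> {set AP}.

Fixpoint sat (AP : finType) (w : word AP) (i : nat) (f : ltl AP) : Prop :=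
  match f with
  | LTrue => True
  | LFalse => False
  | LAtom p => p \in w i
  | LNot g => ~ sat w i g
  | LAnd g h => sat w i g /\ sat w i h
  | LOr g h => sat w i g \/ sat w i h
  | LNext g => sat w i.+1 g
  | LUntil g h => exists k, i <= k /\ sat w k h /\ forall j, i <= j < k -> sat w j g
  | LRelease g h => forall k, i <= k -> sat w k h \/ exists j, i <= j < k /\ sat w j g
  | LEventually g => exists k, i <= k /\ sat w k g
  | LGlobally g => forall k, i <= k -> sat w k g
  end.

Definition ltl_lang (AP : finType) (f : ltl AP) (w : word AP) : Prop := sat w 0 f.

Definition inf_often (Q : eqType) (r : nat -> Q) (q : Q) : Prop :=
  forall N, exists i, N <= i /\ r i = q.

Record NSW (Sigma : Type) := {
  nsw_state : finType;
  nsw_init : {set nsw_state};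
  nsw_delta : nsw_state -> Sigma -> {set nsw_state};
  nsw_acc : seq ({set nsw_state} * {set nsw_state})
}.
Arguments nsw_state {Sigma} n.
Arguments nsw_init {Sigma} n.
Arguments nsw_delta {Sigma} n _ _.
Arguments nsw_acc {Sigma} n.

Definition nsw_is_run Sigma (A : NSW Sigma) (w : nat -> Sigma) (r : nat -> nsw_state A) :=
  r 0 \in nsw_init A /\ forall i, r i.+1 \in nsw_delta A (r i) (w i).
Arguments nsw_is_run {Sigma} A w r.

Definition nsw_accepting Sigma (A : NSW Sigma) (r : nat -> nsw_state A) :=
  forall EF, EF \in nsw_acc A ->
    (forall q, q \in EF.1 -> ~ inf_often r q) \/
    (exists q, q \in EF.2 /\ inf_often r q).
Arguments nsw_accepting {Sigma} A r.

Definition nsw_lang Sigma (A : NSW Sigma) (w : nat -> Sigma) : Prop :=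
  exists r, nsw_is_run A w r /\ nsw_accepting A r.

Definition prefix Sigma (w : nat -> Sigma) (i : nat) : seq Sigma := mkseq w i.

Definition GFG Sigma (A : NSW Sigma) : Prop :=
  exists g : seq Sigma -> nsw_state A,
    forall w : nat -> Sigma,
      nsw_is_run A w (fun i => g (prefix w i)) /\
      (nsw_lang A w -> nsw_accepting A (fun i => g (prefix w i))).

Record DCW (Sigma : Type) := {
  dcw_state : finType;
  dcw_init : dcw_state;
  dcw_delta : dcw_state -> Sigma -> dcw_state;
  dcw_alpha : {set dcw_state}
}.
Arguments dcw_state {Sigma} d.
Arguments dcw_init {Sigma} d.
Arguments dcw_delta {Sigma} d _ _.
Arguments dcw_alpha {Sigma} d.

Fixpoint dcw_run Sigma (A : DCW Sigma) (w : nat -> Sigma) (i : nat) : dcw_state A :=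
  match i with
  | 0 => dcw_init A
  | i'.+1 => dcw_delta A (@dcw_run Sigma A w i') (w i')
  end.
Arguments dcw_run {Sigma} A w i.

Definition dcw_lang Sigma (A : DCW Sigma) (w : nat -> Sigma) : Prop :=
  exists N, forall i, N <= i -> dcw_run A w i \notin dcw_alpha A.

Definition DCW_recognizable Sigma (L : (nat -> Sigma) -> Prop) : Prop :=
  exists A : DCW Sigma, forall w, dcw_lang A w <-> L w.

(* Main.v *)
Require Import Defs.
From mathcomp Require Import all_boot.
From mathcomp Require Import zify.

Set Implicit Arguments. Unset Strict Implicit. Unset Printing Implicit Defensive.

Section Generic.
Variable Sigma : Type.
Variable x0 : Sigma.

Definition catw (u : seq Sigma) (t : nat -> Sigma) : nat -> Sigma :=
  fun i => if i < size u then nth x0 u i else t (i - size u).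

Lemma prefix_cat u t : Defs.prefix (catw u t) (size u) = u.
Proof.
rewrite /Defs.prefix -[RHS](mkseq_nth x0) /mkseq; apply/eq_in_map => i.
by rewrite mem_iota add0n /catw => /andP[_ ->].
Qed.

Lemma catw_ge u t i : size u <= i -> catw u t i = t (i - size u).
Proof. by move=> h; rewrite /catw ltnNge h. Qed.

Lemma inf_shift (Q : eqType) (r r' : nat -> Q) a b :
  (forall i, r' (i + a) = r (i + b)) -> forall q, inf_often r' q <-> inf_often r q.
Proof.
move=> H q; split=> Hi N.
- have [i [hi e]] := Hi (N + a). exists (i - a + b); split; first by lia.
  by rewrite -H subnK ?e //; lia.
- have [i [hi e]] := Hi (N + b). exists (i - b + a); split; first by lia.
  by rewrite H subnK ?e //; lia.
Qed.

Lemma gfg_residual (A : NSW Sigma) (g : seq Sigma -> nsw_state A) :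
  (forall w : nat -> Sigma,
      nsw_is_run A w (fun i => g (Defs.prefix w i)) /\
      (nsw_lang A w -> nsw_accepting A (fun i => g (Defs.prefix w i)))) ->
  forall u u' t, g u = g u' -> nsw_lang A (catw u t) -> nsw_lang A (catw u' t).
Proof.
move=> Hg u u' t e L.
have [[_ rs1] acc] := Hg (catw u t). have {}acc := acc L.
have [[r0 rs] _] := Hg (catw u' t).
set r := fun i => g (Defs.prefix (catw u t) i) in rs1 acc.
pose r' := fun i => if i <= size u' then g (Defs.prefix (catw u' t) i)
                    else r (i - size u' + size u).
have eqr : forall i, size u' <= i -> r' i = r (i - size u' + size u).
  move=> i hi; rewrite /r'; move: hi; rewrite leq_eqVlt => /orP[/eqP c|c].
  - by rewrite -c leqnn prefix_cat subnn add0n /r prefix_cat e.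
  - by rewrite leqNgt c.
exists r'; split; first split.
- by rewrite /r' leq0n.
- move=> i; case: (ltnP i (size u')) => hi.
  + by rewrite /r' hi (ltnW hi); exact: rs.
  + rewrite (eqr _ hi) eqr; last by lia.
    have -> : i.+1 - size u' + size u = (i - size u' + size u).+1 by lia.
    have -> : catw u' t i = catw u t (i - size u' + size u).
      by rewrite !catw_ge ?addnK //; lia.
    exact: rs1.
- have Hs : forall q, inf_often r' q <-> inf_often r q.
    apply: (inf_shift (a := size u') (b := size u)) => i.
    by rewrite eqr ?addnK //; lia.
  move=> EF hEF; case: (acc EF hEF) => [H|[q [hq hi]]].
  + by left=> q hq /Hs; apply: H.
  + by right; exists q; split=> //; apply/Hs.
Qed.
End Generic.

Section Constr.
Variable n : nat.
Local Notation AP := ('I_n.+1).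
Local Notation Sig := ({set 'I_n.+1}).

Definition hsh : AP := ord_max.
Definition bit (k : nat) : AP := inord k.
Definition iffL (a b : ltl AP) := LOr (LAnd a b) (LAnd (LNot a) (LNot b)).
Definition untilB k :=
  LNext (LUntil (LNot (LAtom hsh)) (LAnd (LAtom hsh) (LAtom (bit k)))).
Definition conjF k := iffL (LAtom (bit k)) (untilB k).
Fixpoint conjs (k : nat) : ltl AP :=
  match k with 0 => LTrue _ | k'.+1 => LAnd (conjF k') (conjs k') end.
Definition phi := LEventually (LAnd (LNext (LEventually (LAtom hsh))) (conjs n)).

Lemma size_phi : ltl_size phi <= 22 * n.+1.
Proof.
have H : forall k, ltl_size (conjs k) = 22 * k + 1.
  by elim=> [|k IH] //=; rewrite IH; lia.
by rewrite /= H; lia.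
Qed.

Definition vl (a : Sig) : {set 'I_n} := [set k : 'I_n | bit k \in a].

Definition Lsem (w : word AP) := exists l j, l < j /\ hsh \in w j /\
  (forall x, l < x < j -> hsh \notin w x) /\ vl (w l) = vl (w j).

Lemma until_next (w : word AP) l j k : l < j -> hsh \in w j ->
  (forall x, l < x < j -> hsh \notin w x) ->
  (sat w l (untilB k) <-> bit k \in w j).
Proof.
move=> lj hj nh; rewrite /untilB /=; split.
- case=> k' [le [[hk bk] nb]].
  have -> : j = k'; last by [].
  case: (ltngtP k' j) => // c.
  + by move: (nh k'); rewrite le c hk => /(_ isT).
  + by case: (nb j) => //; apply/andP; split.
- move=> bj; exists j; split=> //; split=> // x /andP[a b] hx.
  by move: (nh x); rewrite a b hx => /(_ isT).
Qed.

Lemma sat_conjs (w : word AP) i k :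
  sat w i (conjs k) <-> forall k', k' < k -> sat w i (conjF k').
Proof.
elim: k => [|k IH] /=; first by split.
split.
- case=> h1 /IH h2 k'; rewrite ltnS leq_eqVlt => /orP[/eqP->//|]; exact: h2.
- by move=> H; split; [apply: H | apply/IH => k' hk; apply: H; lia].
Qed.

Lemma sat_iffAtom (w : word AP) i p B :
  sat w i (iffL (LAtom p) B) <-> (p \in w i <-> sat w i B).
Proof.
rewrite /=; split.
- by case=> [[h1 h2]|[h1 h2]]; split.
- case: (boolP (p \in w i)) => hp H.
  + by left; split=> //; apply/H.
  + by right; split; [apply/negP | move=> /H; apply/negP].
Qed.

Lemma vl_eq a b : vl a = vl b <-> forall k, k < n -> (bit k \in a) = (bit k \in b).
Proof.
split.
- move=> e k kn; have := congr1 (fun s : {set 'I_n} => (Ordinal kn) \in s) e.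
  by rewrite !inE.
- by move=> H; apply/setP => k; rewrite !inE; apply: H.
Qed.

Lemma phi_sem (w : word AP) : ltl_lang phi w <-> Lsem w.
Proof.
rewrite /ltl_lang /phi /=; split.
- case=> i [_ [[k [ik hk]] hc]].
  have exP : exists x, (i < x) && (hsh \in w x) by exists k; rewrite ik hk.
  case: (ex_minnP exP) => j /andP[ij hj] jmin.
  have nh : forall x, i < x < j -> hsh \notin w x.
    move=> x /andP[ix xj]; apply/negP => hx.
    by have := jmin x; rewrite ix hx => /(_ isT); rewrite leqNgt xj.
  exists i, j; split=> //; split=> //; split=> //.
  apply/vl_eq => k' k'n.
  move/sat_conjs: hc => /(_ k' k'n) /sat_iffAtom.
  rewrite (until_next _ ij hj nh) => H.
  by apply/idP/idP => /H.
- case=> l [j [lj [hj [nh ev]]]]; exists l; split=> //; split.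
  + by exists j.
  + apply/sat_conjs => k kn; apply/sat_iffAtom.
    by rewrite (until_next _ lj hj nh); move/vl_eq: ev => /(_ k kn) ->.
Qed.

Definition dstate := option {set {set 'I_n}}.
Definition dstep (s : dstate) (a : Sig) : dstate :=
  match s with
  | None => None
  | Some X => if hsh \in a then (if vl a \in X then None else Some [set vl a])
              else Some (vl a |: X)
  end.
Definition D : DCW Sig :=
  {| dcw_state := dstate; dcw_init := Some set0; dcw_delta := dstep;
     dcw_alpha := [set s : dstate | s != None] |}.

Definition M (w : word AP) i := exists l j, l < j < i /\ hsh \in w j /\
  (forall x, l < x < j -> hsh \notin w x) /\ vl (w l) = vl (w j).

Lemma M_mono w i i' : i <= i' -> M w i -> M w i'.
Proof.
move=> h [l [j [/andP[a b] r]]]; exists l, j; split=> //.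
by apply/andP; split=> //; lia.
Qed.

Lemma run_inv (w : word AP) i :
  match dcw_run D w i with
  | None => M w i
  | Some X => ~ M w i /\ forall v, v \in X <->
      exists l, l < i /\ vl (w l) = v /\ forall x, l < x < i -> hsh \notin w x
  end.
Proof.
elim: i => [|i IH] /=.
- split; first by case=> l [j [/andP[_ ]]].
  by move=> v; rewrite inE; split=> //; case=> l [].
- case: (dcw_run D w i) IH => [X [nM hS]|HM] /=; last by apply: M_mono HM.
  case: (boolP (hsh \in w i)) => hi.
  + case: (boolP (vl (w i) \in X)) => hv.
    * have [l [li [e nh]]] := (hS _).1 hv.
      by exists l, i; split; [apply/andP; split|split].
    * split.
      - case=> l [j [/andP[lj ji] [hj [nh e]]]].
        move: ji; rewrite ltnS leq_eqVlt => /orP[/eqP ej|ji].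
        + subst j; move/negP: hv; apply; apply/(hS _).
          by exists l.
        + by apply: nM; exists l, j; split=> //; apply/andP.
      - move=> v; rewrite inE; split.
        + by move/eqP->; exists i; split=> //; split=> // x; lia.
        + case=> l [li [e nh]]; apply/eqP; rewrite -e.
          move: li; rewrite ltnS leq_eqVlt => /orP[/eqP->//|li].
          by have := nh i; rewrite li ltnSn hi => /(_ isT).
  + split.
    * case=> l [j [/andP[lj ji] [hj [nh e]]]].
      move: ji; rewrite ltnS leq_eqVlt => /orP[/eqP ej|ji].
      - by subst j; rewrite hj in hi.
      - by apply: nM; exists l, j; split=> //; apply/andP.
    * move=> v; rewrite in_setU1; split.
      - case/orP=> [/eqP->|/(hS _) [l [li [e nh]]]].
        + by exists i; split=> //; split=> // x; lia.
        + exists l; split; first by lia.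
          split=> // x /andP[a b]; move: b; rewrite ltnS leq_eqVlt.
          case/orP=> [/eqP->//|b]; apply: nh; lia.
      - case=> l [li [e nh]].
        move: li; rewrite ltnS leq_eqVlt => /orP[/eqP el|li].
        + by subst l; rewrite e eqxx.
        + apply/orP; right; apply/(hS _); exists l; split=> //; split=> // x h.
          by apply: nh; lia.
Qed.

Lemma dcw_sem (w : word AP) : dcw_lang D w <-> Lsem w.
Proof.
split.
- case=> N HN; have := HN N (leqnn N); have := run_inv w N.
  case: (dcw_run D w N) => [X _|] /=; first by rewrite inE.
  by case=> l [j [/andP[lj _] r]] _; exists l, j.
- case=> l [j [lj r]]; exists j.+1 => i hi.
  have Mi : M w i by apply: (M_mono hi); exists l, j; split=> //; apply/andP.
  have := run_inv w i; case: (dcw_run D w i) => [X [nM _]|_] //=.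
  by rewrite inE.
Qed.

Definition enc (v : {set 'I_n}) (h : bool) : Sig :=
  [set y : 'I_n.+1 | if y == hsh then h
                     else [exists k : 'I_n, (val k == val y) && (k \in v)]].

Lemma hsh_enc v h : (hsh \in enc v h) = h.
Proof. by rewrite inE eqxx. Qed.

Lemma vl_enc v h : vl (enc v h) = v.
Proof.
apply/setP => k; rewrite !inE.
have kn : (k : nat) < n.+1 by rewrite ltnS ltnW.
have -> : (bit k == hsh) = false.
  by apply/negbTE; rewrite -val_eqE /= /bit inordK //; rewrite neq_ltn ltn_ord.
apply/existsP/idP.
- case=> k' /andP[/eqP /= e hk]; move: e; rewrite /bit inordK // => e.
  by have -> : k = k' by apply: val_inj.
- by move=> hk; exists k; rewrite /= /bit inordK // eqxx.
Qed.

Definition U (X : {set {set 'I_n}}) : seq Sig := [seq enc v false | v <- enum X].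
Definition tw (X : {set {set 'I_n}}) x : word AP :=
  catw set0 (U X) (fun i => if i == 0 then enc x true else enc set0 false).

Lemma tw_sem X x : Lsem (tw X x) <-> x \in X.
Proof.
have sz : size (U X) = size (enum X) by rewrite size_map.
have wlt : forall i, i < size (enum X) -> tw X x i = enc (nth set0 (enum X) i) false.
  by move=> i hi; rewrite /tw /catw sz hi (nth_map set0).
have hh : forall i, (hsh \in tw X x i) = (i == size (enum X)).
  move=> i; case: (ltnP i (size (enum X))) => hi.
  - by rewrite wlt // hsh_enc; apply/esym/negbTE; rewrite neq_ltn hi.
  - rewrite /tw catw_ge sz //; have [->|ne] := eqVneq i (size (enum X)).
      by rewrite subnn hsh_enc.
    have -> : (i - size (enum X) == 0) = false by apply/negbTE; move: ne hi; lia.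
    by rewrite hsh_enc.
have wp : tw X x (size (enum X)) = enc x true.
  by rewrite /tw catw_ge sz // subnn.
split.
- case=> l [j [lj [hj [_ e]]]].
  move: hj; rewrite hh => /eqP ej; subst j.
  move: e; rewrite wp wlt // !vl_enc => <-.
  by rewrite -mem_enum mem_nth.
- move=> xS; exists (index x (enum X)), (size (enum X)).
  have il : index x (enum X) < size (enum X) by rewrite index_mem mem_enum.
  split=> //; split; first by rewrite hh.
  split.
  + by move=> y /andP[_ b]; rewrite hh neq_ltn b.
  + by rewrite wp wlt // !vl_enc nth_index // mem_enum.
Qed.

End Constr.

Theorem corollary24 :
  exists (c : nat) (m : nat -> nat) (phi : forall n, ltl 'I_(m n)),
    0 < c /\
    forall n,
      ltl_size (phi n) <= c * n.+1 /\
      DCW_recognizable (@ltl_lang _ (phi n)) /\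
      forall A : NSW {set 'I_(m n)},
        GFG A ->
        (forall w, nsw_lang A w <-> ltl_lang (phi n) w) ->
        2 ^ (2 ^ n) <= #|nsw_state A|.
Proof.
exists 22, (fun n => n.+1), (fun n => phi n); split=> // n; split.
  exact: size_phi.
split.
  by exists (D n) => w; rewrite dcw_sem phi_sem.
move=> A [g Hg] Heq.
pose f := fun X : {set {set 'I_n}} => g (U X).
have finj : injective f.
  have key : forall X T, f X = f T -> forall x, x \in X -> x \in T.
    move=> X T e x xS.
    have h1 : nsw_lang A (tw X x) by apply/Heq/phi_sem/tw_sem.
    have h2 := gfg_residual Hg e h1.
    by apply/tw_sem/phi_sem/Heq.
  move=> X T e; apply/setP => x; apply/idP/idP; apply: key => //.
have c1 := leq_card f finj.
have c2 : 2 ^ n <= #|{: {set 'I_n}}|.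
  have := max_card (mem (powerset [set: 'I_n])).
  by rewrite card_powerset cardsT card_ord.
apply: leq_trans c1.
apply: (@leq_trans (2 ^ #|{: {set 'I_n}}|)); first by rewrite leq_exp2l.
have := max_card (mem (powerset [set: {set 'I_n}])).
by rewrite card_powerset cardsT.
Qed.
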